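(* Let $p$ be a prime and $a,c$ positive integers such that $c$ is a primitive divisor of $p^a-1$. Let $b=2^t r_1^{t_1}\cdots r_s^{t_s}$, where $s\ge 1$, $r_1,\ldots,r_s$ are distinct odd primes, $t\ge 0$ and $t_1,\ldots,t_s\ge 1$, and assume $\gcd(p,b)=1$. Put $b'=r_1^{t_1}\cdots r_s^{t_s}$. Assume $\gcd\big(\tfrac{p^a-1}{c},b\big)=1$ and that for each $i=1,\ldots,s$ the multiplicative order of $p^a$ modulo $r_i^{t_i}$ equals $r_i^{h_i}$ for some $0\le h_i\le t_i-1$. If $t\in\{0,1\}$, or if $t\ge 2$ and $p^a\equiv 1\pmod 4$, then $$g\Big(\tfrac{p^{2^tab'}-1}{2^tb'c},\,p^{2^tab'}\Big)=2^t b'\,g\Big(\tfrac{p^a-1}{c},\,p^a\Big).$$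
   Context: For a prime power $q$ and a positive integer $k$, the Waring number $g(k,q)$ is the smallest $s$ (if it exists) such that every element of $\mathbb{F}_q$ is a sum of $s$ $k$-th powers of elements of $\mathbb{F}_q$. An integer $e$ is a primitive divisor of $p^a-1$ if $e\mid p^a-1$ and $e\nmid p^u-1$ for every $1\le u<a$. *)

(* Defs.v *)
From HB Require Import structures.
From mathcomp Require Import all_boot all_order all_algebra all_field.
Set Implicit Arguments. Unset Strict Implicit. Unset Printing Implicit Defensive.
Import GRing.Theory.

Definition waring_sum (F : finFieldType) (k s : nat) : Prop :=
  forall x : F, exists f : 'I_s -> F, x = (\sum_(i < s) f i ^+ k)%R.

(* g(k, |F|) exists and equals s: s is the least such number. *)
Definition is_waring_number (F : finFieldType) (k s : nat) : Prop :=
  waring_sum F k s /\ forall s', s' < s -> ~ waring_sum F k s'.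

Definition primitive_divisor (p a e : nat) : Prop :=
  e %| p ^ a - 1 /\ forall u, 1 <= u < a -> ~~ (e %| p ^ u - 1).

Definition is_mult_order (x n m : nat) : Prop :=
  0 < m /\ x ^ m = 1 %[mod n] /\ forall m', 0 < m' < m -> x ^ m' <> 1 %[mod n].

(* Main.v *)
Require Import Defs.
From HB Require Import structures.
From mathcomp Require Import all_boot all_order all_algebra all_field.
From mathcomp Require Import all_fingroup all_solvable.
From mathcomp Require Import zify.
From Stdlib Require Import Classical.

Module Aux.
Set Implicit Arguments. Unset Strict Implicit. Unset Printing Implicit Defensive.
Import GRing.Theory.

Definition S (q d : nat) := \sum_(i < d) q ^ i.

Lemma S_geom q d : 0 < q -> (q - 1) * S q d = q ^ d - 1.
Proof.
move=> q0; elim: d => [|d IH]; first by rewrite /S big_ord0 muln0.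
rewrite /S big_ord_recr /= -/(S q d) expnS.
have h1 : 1 <= q ^ d by rewrite expn_gt0 q0.
move: IH h1; set x := q ^ d; set y := S q d. nia.
Qed.

Lemma S_mul q l m : 1 < q -> S q (l * m) = S q l * S (q ^ l) m.
Proof.
move=> q1.
have q0 : 0 < q by lia.
have ql0 : 0 < q ^ l by rewrite expn_gt0 q0.
apply/eqP; rewrite -(eqn_pmul2l (_ : 0 < q - 1)); last by lia.
rewrite mulnA S_geom // S_geom // S_geom // -expnM.
by [].
Qed.

Lemma S_mod q d l : q = 1 %[mod l] -> S q d = d %[mod l].
Proof.
move=> hq; elim: d => [|d IH]; first by rewrite /S big_ord0.
rewrite /S big_ord_recr /= -/(S q d) -modnDm IH -modnXm hq modnXm exp1n modnDm addn1.
by [].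
Qed.

Lemma S_dvd_iff q d l : q = 1 %[mod l] -> (l %| S q d) = (l %| d).
Proof. by move=> hq; rewrite /dvdn (S_mod d hq). Qed.

Lemma S_sum_split q l : 0 < q -> S q l = l + (q - 1) * \sum_(i < l) S q i.
Proof.
move=> q0; rewrite big_distrr /= /S.
rewrite -[l in l + _]card_ord -sum1_card -big_split /=.
apply: eq_bigr => i _; rewrite -/(S q i) S_geom //.
have : 1 <= q ^ i by rewrite expn_gt0 q0.
lia.
Qed.

Lemma mod1_dvd q l : 0 < q -> (q = 1 %[mod l]) <-> (l %| q - 1).
Proof. by move=> q0; rewrite -eqn_mod_dvd //; split => [->|/eqP]. Qed.

Lemma S_ell q l : prime l -> 0 < q -> q = 1 %[mod l] ->
  (odd l \/ q = 1 %[mod 4]) -> ~~ (l ^ 2 %| S q l).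
Proof.
move=> pl q0 hq hl.
have l1 : 1 < l by exact: prime_gt1.
rewrite S_sum_split //.
have H : l ^ 2 %| (q - 1) * \sum_(i < l) S q i.
  have [ol | el] := boolP (odd l).
    have l3 : 2 < l.
      have l2 : l != 2 by apply/eqP=> e; move: ol; rewrite e.
      lia.
    rewrite expnS expn1 dvdn_mul //; first by apply/mod1_dvd.
    rewrite /dvdn -modn_summ.
    have -> : \sum_(i < l) S q i %% l = \sum_(i < l) i %% l.
      by apply: eq_bigr => i _; rewrite (S_mod i hq).
    rewrite modn_summ -(big_mkord xpredT (fun i => i)) bin2_sum.
    change (l %| 'C(l, 2)); apply: prime_dvd_bin => //; lia.
  have e2 : l = 2.
    apply/eqP; rewrite eq_sym -(@dvdn_prime2 2 l) //.
    by rewrite dvdn2 el.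
  have h4 : q = 1 %[mod 4] by case: hl => //; rewrite e2.
  rewrite e2 dvdn_mulr //.
  by move/(mod1_dvd _ q0): h4.
rewrite dvdn_addl // expnS expn1.
apply/negP => /(dvdn_leq (ltnW l1)); rewrite -[X in _ <= X]muln1 leq_mul2l; lia.
Qed.

Lemma S_dvd_ell q l : 0 < q -> q = 1 %[mod l] -> l %| S q l.
Proof. by move=> q0 hq; rewrite S_dvd_iff. Qed.

Lemma S_pp l e : prime l -> forall q d, 1 < q -> q = 1 %[mod l] ->
  (odd l \/ q = 1 %[mod 4]) -> (l ^ e %| S q d) = (l ^ e %| d).
Proof.
move=> pl; elim: e => [|e IH] q d q1 hq hl; first by rewrite !expn0 !dvd1n.
have q0 : 0 < q by lia.
have l0 : 0 < l by exact: prime_gt0.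
have ldvd : l %| l ^ e.+1 by rewrite expnS dvdn_mulr.
have [ld | nld] := boolP (l %| d); last first.
  have -> : (l ^ e.+1 %| d) = false.
    by apply/negP => /(dvdn_trans ldvd); apply/negP.
  apply/negP => /(dvdn_trans ldvd); rewrite S_dvd_iff //; exact/negP.
case/dvdnP: ld => m ->; rewrite mulnC S_mul //.
have hS := S_dvd_ell q0 hq.
have nS := S_ell pl q0 hq hl.
set u := S q l %/ l.
have eS : S q l = l * u by rewrite /u mulnC divnK.
have cu : coprime (l ^ e) u.
  clear ldvd; case: e {IH} => [|e]; first by rewrite expn0 coprime1n.
  rewrite coprime_pexpl // prime_coprime //; apply/negP => lu.
  move: nS; rewrite eS expnS expn1 dvdn_pmul2l //; exact/negP/negPn.
rewrite eS -mulnA expnS !dvdn_pmul2l // Gauss_dvdr //.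
apply: IH.
- by rewrite -(exp1n l) ltn_exp2r //; exact: prime_gt0.
- by rewrite -modnXm hq modnXm exp1n.
- case: hl => [->|h4]; [by left | right].
  by rewrite -modnXm h4 modnXm exp1n.
Qed.

Lemma coprime_prod_l s (f : nat -> nat) x :
  (forall i, i < s -> coprime (f i) x) -> coprime (\prod_(i < s) f i) x.
Proof.
elim: s => [|s IH] H; first by rewrite big_ord0 coprime1n.
rewrite big_ord_recr /= coprimeMl IH ?H //.
by move=> i lt; apply: H; lia.
Qed.

Lemma prod_dvd_iff s (f : nat -> nat) X Y :
  (forall i, i < s -> (f i %| X) = (f i %| Y)) ->
  (forall i j, i < s -> j < s -> i <> j -> coprime (f i) (f j)) ->
  (\prod_(i < s) f i %| X) = (\prod_(i < s) f i %| Y).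
Proof.
elim: s => [|s IH] H C; first by rewrite big_ord0 !dvd1n.
have cp : coprime (\prod_(i < s) f i) (f s).
  apply: coprime_prod_l => i lt; apply: C; lia.
rewrite big_ord_recr /= !Gauss_dvd // H // IH //.
- by move=> i lt; apply: H; lia.
- by move=> i j li lj; apply: C; lia.
Qed.

Lemma N_iff q t s (r tt : nat -> nat) d : 1 < q ->
  (forall i, i < s -> prime (r i) /\ odd (r i) /\ 1 <= tt i) ->
  (forall i j, i < s -> j < s -> r i = r j -> i = j) ->
  (forall i, i < s -> q = 1 %[mod r i]) ->
  (t = 0 \/ (t = 1 /\ odd q) \/ (2 <= t /\ q = 1 %[mod 4])) ->
  (2 ^ t * \prod_(i < s) r i ^ tt i %| S q d) = (2 ^ t * \prod_(i < s) r i ^ tt i %| d).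
Proof.
move=> q1 Hr Hd Hq Ht.
have cop : coprime (2 ^ t) (\prod_(i < s) r i ^ tt i).
  rewrite coprime_sym; apply: (coprime_prod_l (f := fun i => r i ^ tt i)) => i lt.
  case: (Hr i lt) => _ [oi ti].
  apply: coprimeXl; rewrite coprime_sym; apply: coprimeXl; rewrite prime_coprime //.
  by rewrite dvdn2 oi.
rewrite !Gauss_dvd //; congr andb.
  case: Ht => [->|[[-> oq]|[t2 h4]]]; first by rewrite !expn0 !dvd1n.
    rewrite expn1 S_dvd_iff //.
    by rewrite modn2 oq.
  apply: S_pp => //; last by right.
  by rewrite -(@modn_dvdm 4) // h4.
have := @prod_dvd_iff s (fun i => r i ^ tt i) (S q d) d; apply => [i lt|i j li lj ne].
  case: (Hr i lt) => pr [or _].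
  apply: S_pp => //; [exact: Hq | by left].
case: (Hr i li) => pi [_ ti]; case: (Hr j lj) => pj [_ tj].
rewrite coprime_pexpl // coprime_pexpr // prime_coprime // dvdn_prime2 //.
by apply/eqP => e; apply: ne; apply: Hd.
Qed.

Local Open Scope ring_scope.

Definition sumsA (T : finFieldType) (A : T -> Prop) (n : nat) (x : T) :=
  exists l : seq T, [/\ size l = n, forall y, y \in l -> A y & x = \sum_(y <- l) y].

Lemma sumsA_pad (T : finFieldType) (A : T -> Prop) n n' x :
  A 0 -> (n <= n')%N -> sumsA A n x -> sumsA A n' x.
Proof.
move=> A0 le [l [sl Al ->]]; exists (l ++ nseq (n' - n) 0); split.
- rewrite size_cat size_nseq sl; lia.
- by move=> y; rewrite mem_cat => /orP[/Al //|/nseqP[-> _]].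
- by rewrite big_cat /= [X in _ + X]big1_seq ?addr0 // => y /andP[_ /nseqP[-> _]].
Qed.

Lemma waring_sumsA (T : finFieldType) k s :
  waring_sum T k s <-> forall x : T, sumsA (fun y => exists z, y = z ^+ k) s x.
Proof.
split => H x.
  have [f ->] := H x.
  exists [seq f i ^+ k | i <- enum 'I_s]; split.
  - by rewrite size_map size_enum_ord.
  - by move=> y /mapP[i _ ->]; exists (f i).
  - by rewrite big_map big_enum.
have [l [sl Al ->]] := H x.
have [rt Hrt] : exists rt : T -> T, forall y, (exists z, y = z ^+ k) -> y = rt y ^+ k.
  have := @fin_all_exists T (fun _ => T) (fun y z => (exists z, y = z ^+ k) -> y = z ^+ k).
  case=> [y|rt Hrt]; last by exists rt.
  case: (classic (exists z, y = z ^+ k)) => [[z hz]|nh]; first by exists z.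
  by exists 0 => h; case: nh.
subst s; exists (fun i : 'I_(size l) => rt (nth 0 l i)).
rewrite (big_nth 0) big_mkord; apply: eq_bigr => i _.
by apply: Hrt; apply: Al; rewrite mem_nth.
Qed.

Section Comb.
Variables (F1 F2 : finFieldType) (phi : F1 -> F2) (N : nat) (g : F2)
  (A1 : F1 -> Prop) (A2 : F2 -> Prop).
Hypothesis phiD : forall x y, phi (x + y) = phi x + phi y.
Hypothesis phi0 : phi 0 = 0.
Hypothesis N0 : (0 < N)%N.
Hypothesis Hex : forall x : F2, exists u : 'I_N -> F1, x = \sum_(j < N) g ^+ j * phi (u j).
Hypothesis Hun : forall u v : 'I_N -> F1,
  \sum_(j < N) g ^+ j * phi (u j) = \sum_(j < N) g ^+ j * phi (v j) -> forall j, u j = v j.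
Hypothesis HA2 : forall y, A2 y <-> exists j : 'I_N, exists2 z, A1 z & y = g ^+ j * phi z.
Hypothesis A10 : A1 0.

Lemma phi_sum (I : Type) (r : seq I) (P : pred I) (F : I -> F1) :
  phi (\sum_(i <- r | P i) F i) = \sum_(i <- r | P i) phi (F i).
Proof. exact: (big_morph phi phiD phi0). Qed.

Lemma A20 : A2 0.
Proof. by apply/HA2; exists (Ordinal N0); exists 0 => //; rewrite phi0 mulr0. Qed.

Lemma comb_back n : (forall x : F1, sumsA A1 (n %/ N) x) -> forall x : F2, sumsA A2 n x.
Proof.
move=> H x; have [u ->] := Hex x.
set m := (n %/ N)%N.
have [L HL] := @fin_all_exists _ (fun _ => seq F1)
   (fun j l => [/\ size l = m, forall y, y \in l -> A1 y & u j = \sum_(y <- l) y]) (fun j => H (u j)).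
apply: (sumsA_pad A20 (leq_divM n N)).
exists (flatten (map (fun j : 'I_N => [seq g ^+ j * phi y | y <- L j]) (enum 'I_N))); split.
- rewrite size_flatten /shape -map_comp sumnE big_map big_enum /=.
  rewrite (eq_bigr (fun=> m)) => [|j _]; last by rewrite size_map; case: (HL j).
  by rewrite sum_nat_const card_ord mulnC.
- move=> y /flattenP[s /mapP[j _ ->] /mapP[z zL ->]].
  by apply/HA2; exists j; exists z => //; case: (HL j) => _ A _; apply: A.
- rewrite big_flatten /= big_map big_enum /=; apply: eq_bigr => j _.
  by rewrite big_map -big_distrr /= -phi_sum; case: (HL j) => _ _ <-.
Qed.

Lemma comb_fwd n : (forall x : F2, sumsA A2 n x) -> forall x : F1, sumsA A1 (n %/ N) x.
Proof.
move=> H x1.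
have [l [sl Al ex]] := H (\sum_(j < N) g ^+ j * phi x1).
have hc : forall y, exists jz : ('I_N * F1)%type, A2 y -> A1 jz.2 /\ y = g ^+ jz.1 * phi jz.2.
  move=> y; case: (classic (A2 y)) => [/HA2 [j [z Az ->]]|nA]; first by exists (j, z).
  by exists (Ordinal N0, 0).
have [JZ HJZ] := @fin_all_exists F2 (fun _ => ('I_N * F1)%type)
  (fun y jz => A2 y -> A1 jz.2 /\ y = g ^+ jz.1 * phi jz.2) hc.
pose J y := (JZ y).1; pose Z y := (JZ y).2.
pose v j := \sum_(y <- l | J y == j) Z y.
have ex2 : \sum_(y <- l) y = \sum_(j < N) g ^+ j * phi (v j).
  rewrite (partition_big J xpredT) //=; apply: eq_bigr => j _.
  rewrite /v phi_sum big_distrr /= big_seq_cond [RHS]big_seq_cond.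
  apply: eq_bigr => y /andP[yl /eqP Jy].
  by have [_ {1}->] := HJZ y (Al y yl); rewrite -/(J y) Jy.
have vx : forall j, v j = x1.
  move=> j; symmetry; apply: (Hun (u := fun _ => x1) (v := v)).
  by rewrite -ex2.
have [j hj] : exists j : 'I_N, (count (fun y => J y == j) l <= n %/ N)%N.
  case: (boolP [exists j : 'I_N, count (fun y => J y == j) l <= n %/ N]%N).
    by move/existsP.
  move/existsPn => Hn; exfalso.
  have : (\sum_(j < N) (n %/ N).+1 <= \sum_(j < N) count (fun y => J y == j) l)%N.
    by apply: leq_sum => j _; rewrite ltnNge Hn.
  rewrite sum_nat_const card_ord.
  have -> : (\sum_(j < N) count (fun y => J y == j) l)%N = n.
    rewrite -sl -sum1_size (partition_big J xpredT) //=.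
    by apply: eq_bigr => j _; rewrite sum1_count.
  have := ltn_ceil n N0; rewrite mulnC; lia.
apply: (sumsA_pad A10 hj).
exists [seq Z y | y <- l & J y == j]; split.
- by rewrite size_map size_filter.
- move=> y /mapP[z]; rewrite mem_filter => /andP[_ zl] ->.
  by have [] := HJZ z (Al z zl).
- by rewrite big_map big_filter -/(v j) vx.
Qed.

End Comb.

Lemma assemble (W1 W2 : nat -> Prop) N : (0 < N)%N ->
  (forall n, W2 n <-> W1 (n %/ N)%N) -> forall n,
  (W2 n /\ forall n', (n' < n)%N -> ~ W2 n') <->
  exists2 m, n = (N * m)%N & (W1 m /\ forall m', (m' < m)%N -> ~ W1 m').
Proof.
move=> N0 HW n; split.
  case=> h2 hmin.
  have h1 := (HW n).1 h2.
  have en : n = (N * (n %/ N))%N.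
    have le := leq_divM n N; rewrite mulnC in le.
    case: (ltngtP (N * (n %/ N)) n) => [lt|gt|-> //]; last by move: gt; rewrite ltnNge le.
    by exfalso; apply: (hmin _ lt); apply/HW; rewrite mulKn.
  exists (n %/ N)%N => //; split => // m' lt h.
  apply: (hmin (N * m')%N).
    by rewrite [X in (_ < X)%N]en ltn_pmul2l.
  by apply/HW; rewrite mulKn.
case=> m -> [h1 hmin]; split; first by apply/HW; rewrite mulKn.
move=> n' lt /HW h; apply: (hmin _ _ h).
by rewrite ltn_divLR // mulnC.
Qed.

Local Open Scope ring_scope.

Section Iota.
Variables (p : nat) (F : fieldType).
Hypothesis chF : p \in [pchar F].

Definition iotaF (_ : p \in [pchar F]) (x : 'F_p) : F := (x : nat)%:R.
Local Notation iota := (iotaF chF).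

Let pp : prime p. Proof. exact: pcharf_prime chF. Qed.

Lemma iota_nat (x : 'F_p) : x = (x : nat)%:R.
Proof. by rewrite natr_Zp. Qed.

Lemma iota_nat_val (n : nat) : iota (n%:R) = n%:R.
Proof. by rewrite /iotaF val_Fp_nat // GRing.natr_mod_pchar. Qed.

Lemma iotaD (x y : 'F_p) : iota (x + y) = iota x + iota y.
Proof.
by rewrite {1}(iota_nat x) {1}(iota_nat y) -natrD iota_nat_val natrD.
Qed.

Lemma iotaM (x y : 'F_p) : iota (x * y) = iota x * iota y.
Proof.
by rewrite {1}(iota_nat x) {1}(iota_nat y) -natrM iota_nat_val natrM.
Qed.

Lemma iota_is_zmod_morphism : zmod_morphism iota.
Proof.
move=> x y; apply/eqP; rewrite eq_sym subr_eq -iotaD subrK //.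
Qed.

Lemma iota_is_monoid_morphism : monoid_morphism iota.
Proof. by split; [rewrite /iotaF /= | exact: iotaM]. Qed.

HB.instance Definition _ := GRing.isZmodMorphism.Build 'F_p F iota iota_is_zmod_morphism.
HB.instance Definition _ := GRing.isMonoidMorphism.Build 'F_p F iota iota_is_monoid_morphism.
End Iota.

Lemma unit_pow (F : finFieldType) (x : F) : x != 0 -> x ^+ #|F|.-1 = 1.
Proof.
move=> x0; apply: (mulIf x0); rewrite mul1r -exprSr prednK ?expf_card //.
by apply/card_gt0P; exists x.
Qed.

Lemma prim_exists (F : finFieldType) : exists z : F, (#|F|.-1).-primitive_root z.
Proof.
have c1 : (1 < #|F|)%N by apply: finNzRing_gt1.
have : has (#|F|.-1).-primitive_root (enum (predC1 (0 : F))).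
  apply: has_prim_root.
  - lia.
  - by apply/allP => x; rewrite mem_enum => x0; apply/unity_rootP; exact: unit_pow.
  - exact: enum_uniq.
  - by rewrite -cardE cardC1.
by case/hasP => z _ hz; exists z.
Qed.

Section Embed.
Variables (p : nat) (F1 F2 : finFieldType).
Hypothesis ch1 : p \in [pchar F1].
Hypothesis ch2 : p \in [pchar F2].
Hypothesis hdiv : (#|F1|.-1 %| #|F2|.-1)%N.

Local Notation io1 := (@iotaF p F1 ch1).
Local Notation io2 := (@iotaF p F2 ch2).

Variable th : F1.
Hypothesis th_prim : (#|F1|.-1).-primitive_root th.

Definition ev1 (f : {poly 'F_p}) := (map_poly io1 f).[th].

Lemma ev1D f g : ev1 (f + g) = ev1 f + ev1 g.
Proof. by rewrite /ev1 rmorphD hornerD. Qed.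
Lemma ev1M f g : ev1 (f * g) = ev1 f * ev1 g.
Proof. by rewrite /ev1 rmorphM hornerM. Qed.
Lemma ev1B f g : ev1 (f - g) = ev1 f - ev1 g.
Proof. by rewrite /ev1 rmorphB hornerD hornerN. Qed.

Lemma card_gt0' (F : finFieldType) : (0 < #|F|)%N.
Proof. by apply/card_gt0P; exists 0. Qed.

Lemma ev1_surj x : exists f, ev1 f = x.
Proof.
have [->|x0] := eqVneq x 0; first by exists 0; rewrite /ev1 rmorph0 horner0.
have [i ->] := prim_rootP th_prim (unit_pow x0).
by exists 'X^i; rewrite /ev1 map_polyXn hornerXn.
Qed.

Lemma ev1_w : ev1 ('X^#|F2| - 'X) = 0.
Proof.
rewrite /ev1 rmorphB /= map_polyXn map_polyX hornerD hornerN hornerXn hornerX.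
rewrite -(prednK (card_gt0' F2)) exprS.
have [k ->] := dvdnP hdiv.
rewrite mulnC exprM (prim_expr_order th_prim) expr1n mulr1 subrr //.
Qed.

Lemma min_exists : exists m : {poly 'F_p}, [/\ m != 0, ev1 m = 0 &
  forall f : {poly 'F_p}, (size f < size m)%N -> ev1 f = 0 -> f = 0].
Proof.
suff H : forall n (w : {poly 'F_p}), (size w <= n)%N -> w != 0 -> ev1 w = 0 ->
   exists m : {poly 'F_p}, [/\ m != 0, ev1 m = 0 &
   forall f : {poly 'F_p}, (size f < size m)%N -> ev1 f = 0 -> f = 0].
  apply: (H _ ('X^#|F2| - 'X)) => //; last exact: ev1_w.
  have c2 : (1 < #|F2|)%N by apply: finNzRing_gt1.
  by rewrite -size_poly_eq0 size_polyDl ?size_polyXn ?size_polyN ?size_polyX.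
elim=> [|n IH] w sw w0 ew.
  by move: w0; rewrite -size_poly_eq0; move: sw; rewrite leqn0 => ->.
case: (classic (exists f : {poly 'F_p}, [/\ (size f < size w)%N, ev1 f = 0 & f != 0])).
  case=> f [sf ef f0]; apply: (IH f) => //; lia.
move=> nh; exists w; split => // f sf ef.
by apply/eqP; apply/negPn/negP => f0; apply: nh; exists f.
Qed.

Lemma io1_eq0 (x : 'F_p) : (io1 x == 0) = (x == 0).
Proof. exact: fmorph_eq0. Qed.

Lemma embed_exists : exists phi : F1 -> F2,
  [/\ forall x y, phi (x + y) = phi x + phi y,
      forall x y, phi (x * y) = phi x * phi y & phi 1 = 1].
Proof.
have [m [m0 em mmin]] := min_exists.
have mdvd : forall f, ev1 f = 0 -> (m %| f)%R.
  move=> f ef; rewrite /dvdp; apply/eqP; apply: mmin.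
    by rewrite ltn_modp.
  have := divp_eq f m => e.
  have : ev1 (f %% m) = ev1 f - ev1 (f %/ m * m) by rewrite -ev1B {2}e addrC addKr.
  by rewrite ev1M em mulr0 subr0 ef.
have [eta root_eta] : exists eta : F2, root (map_poly io2 m) eta.
  have dm : (m %| 'X^#|F2| - 'X)%R by apply: mdvd; exact: ev1_w.
  have dm2 : (map_poly io2 m %| \prod_(x : F2) ('X - x%:P))%R.
    rewrite -finField_genPoly.
    have -> : ('X^#|F2| - 'X : {poly F2}) = map_poly io2 ('X^#|F2| - 'X).
      by rewrite rmorphB /= map_polyXn map_polyX.
    by rewrite dvdp_map.
  have [ms hms] := dvdp_prod_XsubC dm2.
  case e : (mask ms (index_enum F2)) hms => [|x rs] hms.
    exfalso; move: hms; rewrite big_nil -size_poly_eq1 size_map_poly => /eqP sm1.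
    have [c ec] : exists c, m = c%:P.
      by exists m`_0; apply/size1_polyC; rewrite sm1.
    move: em; rewrite ec /ev1 map_polyC hornerC => /eqP; rewrite io1_eq0 => /eqP c0.
    by move: m0; rewrite ec c0 eqxx.
  exists x; rewrite (eqp_root hms).
  have -> : \prod_(i <- x :: rs) ('X - (id i)%:P) = \prod_(a <- x :: rs) ('X - a%:P) by [].
  by rewrite root_prod_XsubC mem_head.
pose ev2 (f : {poly 'F_p}) := (map_poly io2 f).[eta].
have ev2D f g : ev2 (f + g) = ev2 f + ev2 g by rewrite /ev2 rmorphD hornerD.
have ev2M f g : ev2 (f * g) = ev2 f * ev2 g by rewrite /ev2 rmorphM hornerM.
have ev2B f g : ev2 (f - g) = ev2 f - ev2 g by rewrite /ev2 rmorphB hornerD hornerN.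
have ker f : ev1 f = 0 -> ev2 f = 0.
  move/mdvd => /divpK <-; rewrite ev2M.
  by move/rootP: root_eta; rewrite /ev2 => ->; rewrite mulr0.
have surj x : exists f, ev1 f == x by have [f ef] := ev1_surj x; exists f; apply/eqP.
pose phi x := ev2 (xchoose (surj x)).
have phi_ev f : phi (ev1 f) = ev2 f.
  rewrite /phi; set f' := xchoose _.
  have e1 : ev1 f' = ev1 f by apply/eqP; exact: (xchooseP (surj (ev1 f))).
  apply/eqP; rewrite -subr_eq0 -ev2B; apply/eqP/ker.
  by rewrite ev1B e1 subrr.
exists phi; split.
- move=> x y; have [fx <-] := ev1_surj x; have [fy <-] := ev1_surj y.
  by rewrite -ev1D !phi_ev ev2D.
- move=> x y; have [fx <-] := ev1_surj x; have [fy <-] := ev1_surj y.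
  by rewrite -ev1M !phi_ev ev2M.
- have -> : (1 : F1) = ev1 1 by rewrite /ev1 rmorph1 hornerC.
  by rewrite phi_ev /ev2 rmorph1 hornerC.
Qed.
End Embed.

Local Open Scope ring_scope.

Lemma frob_add (R : comNzRingType) p (ch : p \in [pchar R]) k (x y : R) :
  (x + y) ^+ (p ^ k) = x ^+ (p ^ k) + y ^+ (p ^ k).
Proof.
elim: k => [|k IH]; first by rewrite !expn0 !expr1.
rewrite expnSr !exprM IH -!(pFrobenius_autE ch) pFrobenius_autD_comm //.
exact: mulrC.
Qed.

Lemma frob_sum (R : comNzRingType) p (ch : p \in [pchar R]) k (I : Type) (r : seq I) (F : I -> R) :
  (\sum_(i <- r) F i) ^+ (p ^ k) = \sum_(i <- r) F i ^+ (p ^ k).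
Proof.
apply: (big_morph (fun x => x ^+ (p ^ k))) => [x y|]; first exact: frob_add.
by rewrite expr0n expn_eq0 eqn0Ngt prime_gt0 ?(pcharf_prime ch).
Qed.

Section Coord.
Variables (F1 F2 : finFieldType) (phi : F1 -> F2).
Hypothesis phiD : forall x y, phi (x + y) = phi x + phi y.
Hypothesis phiM : forall x y, phi (x * y) = phi x * phi y.
Hypothesis phi1 : phi 1 = 1.

Lemma phi0 : phi 0 = 0.
Proof. by apply: (addrI (phi 0)); rewrite -phiD !addr0. Qed.
Lemma phiN x : phi (- x) = - phi x.
Proof. by apply: (addrI (phi x)); rewrite -phiD !subrr phi0. Qed.
Lemma phiB x y : phi (x - y) = phi x - phi y.
Proof. by rewrite phiD phiN. Qed.
Lemma phiX x n : phi (x ^+ n) = phi x ^+ n.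
Proof. by elim: n => [|n IH]; rewrite ?expr0 // !exprS phiM IH. Qed.
Lemma phi_eq0 x : (phi x == 0) = (x == 0).
Proof.
have [->|x0] := eqVneq x 0; first by rewrite phi0 eqxx.
apply/negbTE; apply/eqP => h.
have : phi (x * x^-1) = 1 by rewrite mulfV // phi1.
by rewrite phiM h mul0r => /eqP; rewrite eq_sym oner_eq0.
Qed.
Lemma phi_inj : injective phi.
Proof. by move=> x y e; apply/eqP; rewrite -subr_eq0 -phi_eq0 phiB e subrr. Qed.

Variables (p a N c : nat) (g : F2).
Hypothesis ch2 : p \in [pchar F2].
Hypothesis cardF1 : #|F1| = (p ^ a)%N.
Hypothesis cardF2 : #|F2| = ((p ^ a) ^ N)%N.
Hypothesis g_prim : (N * c).-primitive_root g.
Hypothesis cop : coprime (N * c) (p ^ a).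
Hypothesis nt3 : forall d, (0 < d < N)%N -> ~~ (N * c %| (p ^ a) ^ d - 1)%N.

Local Notation q := (p ^ a)%N.

Lemma F1_pow (x : F1) i : x ^+ (q ^ i) = x.
Proof.
elim: i => [|i IH]; first by rewrite expn0 expr1.
by rewrite expnSr exprM IH -cardF1 expf_card.
Qed.

Lemma pow_inj_aux i j : (i < j < N)%N -> q ^ i = q ^ j %[mod N * c] -> False.
Proof.
move=> /andP[ij jN] h.
have q0 : (0 < q)%N by rewrite expn_gt0 prime_gt0 ?(pcharf_prime ch2).
have ej : j = (i + (j - i))%N by lia.
have le : (q ^ i <= q ^ j)%N by rewrite ej expnD leq_pmulr // expn_gt0 q0.
move/eqP: h; rewrite eq_sym eqn_mod_dvd // ej expnD -{2}(muln1 (q ^ i)%N) -mulnBr.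
rewrite Gauss_dvdr; last by rewrite coprimeXr.
by apply/negP; apply: nt3; lia.
Qed.

Lemma coord_inj (u v : 'I_N -> F1) :
  \sum_(j < N) g ^+ j * phi (u j) = \sum_(j < N) g ^+ j * phi (v j) -> forall j, u j = v j.
Proof.
move=> e.
pose w j := u j - v j.
have e0 : \sum_(j < N) phi (w j) * g ^+ j = 0.
  rewrite (eq_bigr (fun j : 'I_N => g ^+ j * phi (u j) - g ^+ j * phi (v j))) => [|j _].
    by rewrite sumrB e subrr.
  by rewrite /w phiB mulrBl mulrC [phi (v j) * _]mulrC.
pose P := \sum_(j < N) phi (w j) *: 'X^j.
have Pev x : P.[x] = \sum_(j < N) phi (w j) * x ^+ j.
  by rewrite horner_sum; apply: eq_bigr => j _; rewrite hornerZ hornerXn.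
have Pco (j : 'I_N) : P`_j = phi (w j).
  rewrite coef_sum (bigD1 j) //= coefZ coefXn eqxx mulr1 big1 ?addr0 //.
  move=> i ne; rewrite coefZ coefXn; case: eqP => [/ord_inj ej|_]; last by rewrite mulr0.
  by rewrite ej eqxx in ne.
have sP : (size P <= N)%N.
  apply: leq_trans (size_sum _ _ _) _; apply/bigmax_leqP => j _.
  by apply: leq_trans (size_scale_leq _ _) _; rewrite size_polyXn.
pose rs := [seq g ^+ (q ^ i) | i <- iota 0 N].
have P0 : P = 0.
  apply/eqP; apply/negPn/negP => nP.
  have H := @max_poly_roots _ P rs nP; rewrite size_map size_iota in H.
  have : (N < size P)%N; last by rewrite ltnNge sP.
  apply: H.
    apply/allP => y /mapP[i _ ->]; apply/rootP.
    have qi0 : (0 < q ^ i)%N by rewrite !expn_gt0 prime_gt0 ?(pcharf_prime ch2).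
    have E : (\sum_(j < N) phi (w j) * g ^+ j) ^+ (q ^ i) = 0.
      by rewrite e0 expr0n eqn0Ngt qi0.
    rewrite -E Pev -expnM (frob_sum ch2); apply: eq_bigr => j _.
    by rewrite exprMn -phiX expnM F1_pow exprAC.
  rewrite map_inj_in_uniq ?iota_uniq // => i j; rewrite !mem_iota !add0n => hi hj.
  move/eqP; rewrite (eq_prim_root_expr g_prim) => /eqP h.
  case: (ltngtP i j) => [lt|gt|//]; exfalso.
    by apply: (@pow_inj_aux i j) => //; rewrite lt.
  by apply: (@pow_inj_aux j i) => //; rewrite gt.
move=> j; apply/eqP; rewrite -subr_eq0 -phi_eq0 -/(w j) -Pco P0 coef0 //.
Qed.

Lemma coord_ex (x : F2) : exists u : 'I_N -> F1, x = \sum_(j < N) g ^+ j * phi (u j).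
Proof.
pose Phi (u : {ffun 'I_N -> F1}) := \sum_(j < N) g ^+ j * phi (u j).
have inj : injective Phi.
  by move=> u v e; apply/ffunP => j; apply: (coord_inj e).
have := @inj_card_onto _ _ Phi inj.
rewrite card_ffun card_ord cardF1 cardF2 leqnn => /(_ isT x) /codomP [u ->].
by exists u.
Qed.
End Coord.

Set Implicit Arguments. Unset Strict Implicit. Unset Printing Implicit Defensive.
Import GRing.Theory.
Local Open Scope ring_scope.

Section Powers.
Variables (F1 F2 : finFieldType) (phi : F1 -> F2).
Hypothesis phiD : forall x y, phi (x + y) = phi x + phi y.
Hypothesis phiM : forall x y, phi (x * y) = phi x * phi y.
Hypothesis phi1 : phi 1 = 1.
Variables (N c k1 k2 : nat) (th : F1) (ga : F2).
Hypothesis th_prim : (#|F1|.-1).-primitive_root th.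
Hypothesis ga_prim : (#|F2|.-1).-primitive_root ga.
Hypothesis N0 : (0 < N)%N.
Hypothesis c0 : (0 < c)%N.
Hypothesis hk1 : #|F1|.-1 = (k1 * c)%N.
Hypothesis hk2 : #|F2|.-1 = (k2 * (N * c))%N.

Local Notation g := (ga ^+ k2).

Lemma g_prim : (N * c).-primitive_root g.
Proof.
have d : (N * c %| #|F2|.-1)%N by rewrite hk2 dvdn_mull.
have := dvdn_prim_root ga_prim d.
by rewrite hk2 mulnK ?muln_gt0 ?N0 ?c0.
Qed.

Lemma th1_prim : c.-primitive_root (th ^+ k1).
Proof.
have d : (c %| #|F1|.-1)%N by rewrite hk1 dvdn_mull.
have := dvdn_prim_root th_prim d.
by rewrite hk1 mulnK.
Qed.

Lemma gN_prim : c.-primitive_root (g ^+ N).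
Proof.
have d : (c %| N * c)%N by rewrite dvdn_mull.
have := dvdn_prim_root g_prim d.
by rewrite mulnK.
Qed.

Lemma phith1_prim : c.-primitive_root (phi (th ^+ k1)).
Proof.
have e1 : phi (th ^+ k1) ^+ c = 1.
  by rewrite -(phiX phiM phi1) (prim_expr_order th1_prim) phi1.
have [m hm dm] := prim_order_exists c0 e1.
suff -> : c = m by [].
apply/eqP; rewrite eqn_dvd dm andbT (prim_order_dvd th1_prim).
apply/eqP; apply: (phi_inj phiD phiM phi1).
by rewrite (phiX phiM phi1) (prim_expr_order hm) phi1.
Qed.

Lemma k2_gt0 : (0 < k2)%N.
Proof.
have c2 : (1 < #|F2|)%N by apply: finNzRing_gt1.
move: hk2; case: k2 => //; lia.
Qed.

Lemma k1_gt0 : (0 < k1)%N.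
Proof.
have c2 : (1 < #|F1|)%N by apply: finNzRing_gt1.
move: hk1; case: k1 => //; lia.
Qed.

Lemma powchar y : (exists x, y = x ^+ k2) <->
  exists j : 'I_N, exists2 z, (exists w, z = w ^+ k1) & y = g ^+ j * phi z.
Proof.
split.
  case=> x ->.
  have [->|x0] := eqVneq x 0.
    exists (Ordinal N0); exists 0; first by exists 0; rewrite expr0n eqn0Ngt k1_gt0.
    by rewrite (phi0 phiD) mulr0 expr0n eqn0Ngt k2_gt0.
  have [e ->] := prim_rootP ga_prim (unit_pow x0).
  have [i hi] := prim_rootP phith1_prim (prim_expr_order gN_prim).
  exists (Ordinal (ltn_pmod e N0)); exists ((th ^+ (i * (e %/ N))) ^+ k1).
    by exists (th ^+ (i * (e %/ N))).
  rewrite exprAC -exprM mulnC exprAC (phiX phiM phi1) -exprM /=.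
  rewrite [phi _ ^+ _]exprM -hi -!exprM -exprD; congr (_ ^+ _).
  rewrite {1}(divn_eq e N); set u := (e %/ N)%N; set v := (e %% N)%N; nia.
case=> j [z [w ->] ->].
have [->|w0] := eqVneq w 0.
  by exists 0; rewrite expr0n eqn0Ngt k1_gt0 (phi0 phiD) mulr0 expr0n eqn0Ngt k2_gt0.
have [e ->] := prim_rootP th_prim (unit_pow w0).
have [i hi] := prim_rootP gN_prim (prim_expr_order phith1_prim).
exists (ga ^+ (j + N * (i * e))).
rewrite [th ^+ e ^+ k1]exprAC (phiX phiM phi1) hi -!exprM -exprD.
congr (_ ^+ _); nia.
Qed.
End Powers.

Set Implicit Arguments. Unset Strict Implicit. Unset Printing Implicit Defensive.
Import GRing.Theory.

Local Close Scope ring_scope.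
Lemma fermat_iter q r h : prime r -> q ^ (r ^ h) = q %[mod r].
Proof.
move=> pr; elim: h => [|h IH]; first by rewrite expn0 expn1.
by rewrite expnSr expnM -modnXm IH modnXm fermat_little.
Qed.

Lemma mult_order_mod1 q r tt h : prime r -> 0 < tt ->
  is_mult_order q (r ^ tt) (r ^ h) -> q = 1 %[mod r].
Proof.
move=> pr tt0 [_ [e _]].
have d : r %| r ^ tt by rewrite -{1}(expn1 r) dvdn_exp2l.
rewrite -(fermat_iter q h pr) -(modn_dvdm (q ^ r ^ h) d) e modn_dvdm //.
Qed.


End Aux.
Import Aux.
Import GRing.Theory.
Unset Implicit Arguments.

Theorem mainTheorem15 (p a c t s : nat) (r tt : nat -> nat)
  (F1 F2 : finFieldType) :
  prime p -> 0 < a -> 0 < c -> primitive_divisor p a c ->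
  1 <= s ->
  (forall i, i < s -> prime (r i) /\ odd (r i) /\ 1 <= tt i) ->
  (forall i j, i < s -> j < s -> r i = r j -> i = j) ->
  let b' := \prod_(i < s) r i ^ tt i in
  let b := 2 ^ t * b' in
  coprime p b ->
  coprime ((p ^ a - 1) %/ c) b ->
  (forall i, i < s -> exists2 h, h <= tt i - 1 &
       is_mult_order (p ^ a) (r i ^ tt i) (r i ^ h)) ->
  (t <= 1 \/ (2 <= t /\ p ^ a = 1 %[mod 4])) ->
  #|F1| = p ^ a ->
  #|F2| = p ^ (2 ^ t * a * b') ->
  forall n : nat,
    is_waring_number F2 ((p ^ (2 ^ t * a * b') - 1) %/ (2 ^ t * b' * c)) n <->
    exists2 m, n = 2 ^ t * b' * m & is_waring_number F1 ((p ^ a - 1) %/ c) m.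
Proof.
move=> pp a0 c0 [cdiv _] s1 Hr Hd b' b cpb ck Hord Ht card1 card2 n.
set q := p ^ a.
set N := 2 ^ t * b'.
set k1 := (q - 1) %/ c.
have q1 : 1 < q by rewrite -(exp1n a) ltn_exp2r // prime_gt1.
have q0 : 0 < q by lia.
have b'0 : 0 < b'.
  rewrite /b' prodn_gt0 // => i; rewrite expn_gt0.
  by case: (Hr i (ltn_ord i)) => pr _; rewrite prime_gt0.
have N0 : 0 < N by rewrite /N muln_gt0 expn_gt0 b'0.
have eQ : p ^ (2 ^ t * a * b') = q ^ N.
  by rewrite /q -expnM /N mulnCA mulnA.
rewrite eQ in card2 *.
have Hq : forall i, i < s -> q = 1 %[mod r i].
  move=> i lt; have [h _ ho] := Hord i lt.
  case: (Hr i lt) => pr [_ ti].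
  exact: (mult_order_mod1 pr ti ho).
have Ht' : t = 0 \/ (t = 1 /\ odd q) \/ (2 <= t /\ q = 1 %[mod 4]).
  case: Ht => [t1|[t2 h4]]; last by right; right.
  have [t0|te] : t = 0 \/ t = 1 by lia.
    by left.
  right; left; split => //.
  rewrite /q oddX orbC; apply/orP; left.
  move: cpb; rewrite /b te expn1 coprimeMr => /andP[cp2 _].
  by move: cp2; rewrite coprime_sym prime_coprime // dvdn2 negbK.
have NS : forall d, (N %| S q d) = (N %| d).
  by move=> d; apply: N_iff.
have ek1 : q - 1 = k1 * c by rewrite divnK.
have cNk1 : coprime N k1 by rewrite coprime_sym.
have nt2 : N * c %| q ^ N - 1.
  by rewrite -S_geom // ek1 [k1 * c]mulnC -mulnA [N * c]mulnC dvdn_pmul2l // dvdn_mull // NS.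
have nt3 : forall d, 0 < d < N -> ~~ (N * c %| q ^ d - 1).
  move=> d /andP[d0 dN]; rewrite -S_geom // ek1 [k1 * c]mulnC -mulnA [N * c]mulnC.
  rewrite dvdn_pmul2l // Gauss_dvdr // NS.
  by apply/negP => /(dvdn_leq d0); lia.
set k2 := (q ^ N - 1) %/ (N * c).
have hk1 : #|F1|.-1 = k1 * c by rewrite card1 -subn1 ek1.
have hk2 : #|F2|.-1 = k2 * (N * c) by rewrite card2 -subn1 divnK.
have cop : coprime (N * c) q.
  rewrite coprimeMl; apply/andP; split.
    by rewrite /q coprimeXr // coprime_sym.
  apply: (coprime_dvdl cdiv); rewrite -/q.
  by rewrite -{2}(subnK (ltnW q1)) addn1 coprimenS.
have ch1 : p \in [pchar F1]%R by apply: (card_finPcharP card1).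
have ch2 : p \in [pchar F2]%R.
  by apply: (@card_finPcharP _ _ (a * N) _ pp); rewrite card2 expnM.
have [th th_prim] := prim_exists F1.
have [ga ga_prim] := prim_exists F2.
have hdiv : #|F1|.-1 %| #|F2|.-1.
  rewrite card1 card2 -!subn1 -(S_geom N q0); exact: dvdn_mulr.
have [phi [phiD phiM phi1]] := embed_exists ch1 ch2 hdiv th_prim.
pose g := (ga ^+ k2)%R.
have gp : (N * c).-primitive_root%R g := g_prim ga_prim N0 c0 hk2.
have Hex := coord_ex phiD phiM phi1 ch2 card1 card2 gp cop nt3.
have Hun := coord_inj phiD phiM phi1 ch2 card1 card2 gp cop nt3.
have HA2 := powchar phiD phiM phi1 th_prim ga_prim N0 c0 hk1 hk2.
have A10 : exists w : F1, 0%R = (w ^+ k1)%R.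
  by exists 0%R; rewrite expr0n eqn0Ngt (k1_gt0 th_prim ga_prim N0 c0 hk1 hk2).
have HW : forall m, waring_sum F2 k2 m <-> waring_sum F1 k1 (m %/ N).
  move=> m; rewrite !waring_sumsA; split.
    exact: (comb_fwd phiD (phi0 phiD) N0 Hun HA2 A10).
  exact: (comb_back phiD (phi0 phiD) N0 Hex HA2 A10).
exact: (assemble N0 HW).
Qed.
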